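(* Let $v:\mathbb{R}/\mathbb{Z}\to\mathbb{R}$ be real analytic, $\alpha\in\mathbb{R}\setminus\mathbb{Q}$, $x\in\mathbb{R}$, $E\in\mathbb{R}$, and $A=A^{(E-v)}$. There is a constant $C>0$, independent of $k$, $\epsilon$, $x$, $E$ and $v$, such that for every integer $k\ge1$: if $\epsilon>0$ satisfies $\det P_{(k)}=\frac{1}{4\epsilon^2}$, then $$C^{-1}<\frac{\psi(m^+(E+i\epsilon))}{2\epsilon\|P_{(k)}\|}<C.$$
   Context: $A^{(E-v)}(y)=\begin{pmatrix}E-v(y)&-1\\1&0\end{pmatrix}$, $A_n(y)=A(y+(n-1)\alpha)\cdots A(y)$ for $n\ge1$, and $P_{(k)}=\sum_{j=1}^k A_{2j-1}(x+\alpha)^*A_{2j-1}(x+\alpha)$ (a positive self-adjoint $2\times2$ matrix). $H=H_{v,\alpha,x}$ is the operator $(Hu)_n=u_{n+1}+u_{n-1}+v(x+n\alpha)u_n$ on $\ell^2(\mathbb{Z})$. For $z=E+i\epsilon$, $\epsilon>0$, let $u^+$ be a nonzero solution of $Hu^+=zu^+$ (as a formal difference equation) which is square summable at $+\infty$ (unique up to normalization), and $m^+(z)=-u^+_1/u^+_0$; it lies in the upper half plane $\mathbb{H}$. For $t\in\mathbb{R}$ let $R_t=\begin{pmatrix}\cos2\pi t&-\sin2\pi t\\\sin2\pi t&\cos2\pi t\end{pmatrix}$, acting on $\mathbb{H}$ by Möbius transformations $\begin{pmatrix}a&b\\c&d\end{pmatrix}\cdot z=\frac{az+b}{cz+d}$;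 for $z\in\mathbb{H}$ set $z_\beta=R_{-\beta/2\pi}\cdot z$ and $\psi(z)=\sup_\beta|z_\beta|$. *)

(* Defs.v *)
From Stdlib Require Import Reals ZArith QArith Qreals.
From Coquelicot Require Import Coquelicot.
Open Scope R_scope.

Record mat2 := M2 { m11 : R; m12 : R; m21 : R; m22 : R }.

Definition mmul (A B : mat2) : mat2 :=
  M2 (m11 A * m11 B + m12 A * m21 B) (m11 A * m12 B + m12 A * m22 B)
     (m21 A * m11 B + m22 A * m21 B) (m21 A * m12 B + m22 A * m22 B).
Definition madd (A B : mat2) : mat2 :=
  M2 (m11 A + m11 B) (m12 A + m12 B) (m21 A + m21 B) (m22 A + m22 B).
Definition mid : mat2 := M2 1 0 0 1.
Definition mzero : mat2 := M2 0 0 0 0.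
(* adjoint of a real matrix = transpose *)
Definition madj (A : mat2) : mat2 := M2 (m11 A) (m21 A) (m12 A) (m22 A).
Definition mdet (A : mat2) : R := m11 A * m22 A - m12 A * m21 A.

Definition opnorm (A : mat2) : Rbar :=
  Lub_Rbar (fun r => exists w1 w2 : R, w1 ^ 2 + w2 ^ 2 = 1 /\
     r = sqrt ((m11 A * w1 + m12 A * w2) ^ 2 + (m21 A * w1 + m22 A * w2) ^ 2)).

Definition Acoc (v : R -> R) (E y : R) : mat2 := M2 (E - v y) (-1) 1 0.

Fixpoint An (v : R -> R) (alpha E : R) (n : nat) (y : R) : mat2 :=
  match n with
  | O => mid
  | S n' => mmul (Acoc v E (y + INR n' * alpha)) (An v alpha E n' y)
  end.

Fixpoint Pk (v : R -> R) (alpha x E : R) (k : nat) : mat2 :=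
  match k with
  | O => mzero
  | S k' => madd (Pk v alpha x E k')
      (mmul (madj (An v alpha E (2 * k' + 1) (x + alpha)))
            (An v alpha E (2 * k' + 1) (x + alpha)))
  end.

Definition irrational (a : R) : Prop := forall q : Q, a <> Q2R q.

(* v : R/Z -> R, represented as a 1-periodic function on R *)
Definition one_periodic (v : R -> R) : Prop := forall y, v (y + 1) = v y.

Definition real_analytic (v : R -> R) : Prop :=
  forall y0 : R, exists (r : R) (a : nat -> R), 0 < r /\
    forall y, Rabs (y - y0) < r -> is_pseries a (y - y0) (v y).

Local Open Scope C_scope.

(* u solves H_{v,alpha,x} u = z u as a formal difference equation on Z *)
Definition solves (v : R -> R) (alpha x : R) (z : C) (u : Z -> C) : Prop :=
  forall n : Z,
    u (n + 1)%Z + u (n - 1)%Z + RtoC (v (x + IZR n * alpha)%R) * u n = z * u n.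

Definition nonzero_seq (u : Z -> C) : Prop := exists n : Z, u n <> 0.

Definition l2_at_plus_infty (u : Z -> C) : Prop :=
  ex_series (fun n : nat => (Cmod (u (Z.of_nat n)) ^ 2)%R).

(* m^+ from a Weyl solution u^+ *)
Definition m_of (u : Z -> C) : C := - (u 1%Z / u 0%Z).

Definition Rot (t : R) : mat2 :=
  M2 (cos (2 * PI * t)) (- sin (2 * PI * t)) (sin (2 * PI * t)) (cos (2 * PI * t)).

Definition mobius (M : mat2) (z : C) : C :=
  (RtoC (m11 M) * z + RtoC (m12 M)) / (RtoC (m21 M) * z + RtoC (m22 M)).

Definition z_beta (z : C) (beta : R) : C := mobius (Rot (- beta / (2 * PI))) z.

Definition psi (z : C) : Rbar :=
  Lub_Rbar (fun r => exists beta : R, r = Cmod (z_beta z beta)).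

(* Main.v *)
Require Import Defs.
From Stdlib Require Import Reals ZArith QArith Qreals Lra Lia Psatz.
From Coquelicot Require Import Coquelicot.
Open Scope R_scope.

Fixpoint ssum (f : nat -> R) (n : nat) : R :=
  match n with O => 0 | S n' => ssum f n' + f n' end.

Lemma ssum_S f n : ssum f (S n) = ssum f n + f n.
Proof. reflexivity. Qed.
Lemma ssum_0 f : ssum f 0 = 0.
Proof. reflexivity. Qed.

Lemma ssum_ext f g n : (forall i, (i < n)%nat -> f i = g i) -> ssum f n = ssum g n.
Proof. induction n; intros H; simpl; auto. rewrite IHn by (intros; apply H; lia). rewrite (H n) by lia. reflexivity. Qed.

Lemma ssum_plus f g n : ssum (fun i => f i + g i) n = ssum f n + ssum g n.
Proof. induction n; simpl; [lra|]. rewrite IHn; ring. Qed.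

Lemma ssum_scal c f n : ssum (fun i => c * f i) n = c * ssum f n.
Proof. induction n; simpl; [ring|]. rewrite IHn; ring. Qed.

Lemma ssum_mulr c f n : ssum (fun i => f i * c) n = ssum f n * c.
Proof. induction n; simpl; [ring|]. rewrite IHn; ring. Qed.

Lemma ssum_nonneg f n : (forall i, 0 <= f i) -> 0 <= ssum f n.
Proof. intros H; induction n; simpl; [lra|]. specialize (H n); lra. Qed.

Lemma ssum_le f g n : (forall i, (i < n)%nat -> f i <= g i) -> ssum f n <= ssum g n.
Proof. induction n; intros H; simpl; [lra|]. assert (ssum f n <= ssum g n) by (apply IHn; intros; apply H; lia).
 specialize (H n ltac:(lia)); lra. Qed.

Lemma ssum_mono f n m : (forall i, 0 <= f i) -> (n <= m)%nat -> ssum f n <= ssum f m.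
Proof. intros H Hnm; induction Hnm; [lra|]. simpl. specialize (H m); lra. Qed.

Lemma cs_step s0 A B x y : 0 <= A -> 0 <= B -> s0^2 <= A*B ->
  (s0 + x*y)^2 <= (A + x^2) * (B + y^2).
Proof.
  intros HA HB H.
  assert (H1: (2*s0*x*y)^2 <= (A*y^2 + B*x^2)^2).
  { assert (0 <= (A*y^2 - B*x^2)^2) by apply pow2_ge_0.
    assert ((2*s0*x*y)^2 = 4 * s0^2 * (x^2*y^2)) by ring.
    assert (s0^2*(x^2*y^2) <= A*B*(x^2*y^2)) by (apply Rmult_le_compat_r; nra).
    nra. }
  assert (H2: 0 <= A*y^2 + B*x^2) by nra.
  assert (H3: 2*s0*x*y <= A*y^2 + B*x^2).
  { destruct (Rle_dec (2*s0*x*y) 0); [lra|]. nra. }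
  nra.
Qed.

Lemma cauchy_schwarz f g n :
  (ssum (fun i => f i * g i) n)^2 <= ssum (fun i => (f i)^2) n * ssum (fun i => (g i)^2) n.
Proof.
  induction n; simpl; [lra|].
  replace ((f n)^2) with ((f n)^2) by ring.
  apply cs_step; auto; apply ssum_nonneg; intros; nra.
Qed.

Lemma ssum_double x y M N :
  ssum (fun i => ssum (fun j => x i * y j) N) M = ssum x M * ssum y N.
Proof.
  induction M; simpl; [ring|]. rewrite IHM, ssum_scal. ring.
Qed.

Lemma lagrange x y N :
  ssum (fun i => ssum (fun j => (x i * y j - x j * y i)^2) N) N =
  2 * (ssum (fun i => x i ^2) N * ssum (fun i => y i ^2) N
       - ssum (fun i => x i * y i) N * ssum (fun i => x i * y i) N).
Proof.
  transitivity (ssum (fun i => ssum (fun j => x i ^2 * y j ^2) N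
     + ssum (fun j => y i ^2 * x j ^2) N + ssum (fun j => (-2 * (x i * y i)) * (x j * y j)) N) N).
  { apply ssum_ext; intros i _. rewrite <- !ssum_plus. apply ssum_ext; intros; ring. }
  rewrite !ssum_plus.
  rewrite (ssum_double (fun i => x i ^2) (fun j => y j ^2)).
  rewrite (ssum_double (fun i => y i ^2) (fun j => x j ^2)).
  rewrite (ssum_double (fun i => -2 * (x i * y i)) (fun j => x j * y j)).
  rewrite ssum_scal. ring.
Qed.
Section Seq.
Variables (v : R -> R) (alpha x E : R).
Definition ve (n : nat) := v (x + INR n * alpha).
Definition sa n := m21 (An v alpha E n (x + alpha)).
Definition sb n := m22 (An v alpha E n (x + alpha)).

Lemma sa_S n : sa (S n) = m11 (An v alpha E n (x + alpha)).
Proof. unfold sa; simpl; ring. Qed.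
Lemma sb_S n : sb (S n) = m12 (An v alpha E n (x + alpha)).
Proof. unfold sb; simpl; ring. Qed.

Lemma ve_eq n : v (x + alpha + INR n * alpha) = ve (S n).
Proof. unfold ve; f_equal; rewrite S_INR; ring. Qed.

Lemma sa_rec n : sa (S (S n)) = (E - ve (S n)) * sa (S n) - sa n.
Proof. rewrite sa_S, sa_S; unfold sa; simpl. rewrite ve_eq; ring. Qed.
Lemma sb_rec n : sb (S (S n)) = (E - ve (S n)) * sb (S n) - sb n.
Proof. rewrite sb_S, sb_S; unfold sb; simpl. rewrite ve_eq; ring. Qed.

Lemma sa0 : sa 0 = 0. Proof. reflexivity. Qed.
Lemma sb0 : sb 0 = 1. Proof. reflexivity. Qed.
Lemma sa1 : sa 1 = 1. Proof. unfold sa; simpl; ring. Qed.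
Lemma sb1 : sb 1 = 0. Proof. unfold sb; simpl; ring. Qed.

Lemma mdet_mul A B : mdet (mmul A B) = mdet A * mdet B.
Proof. destruct A, B; unfold mdet; simpl; ring. Qed.

Lemma mdet_An n : mdet (An v alpha E n (x+alpha)) = 1.
Proof.
  induction n; [unfold mdet; simpl; ring|].
  simpl An. rewrite mdet_mul, IHn. unfold mdet; simpl; ring.
Qed.

Lemma wronsk n : sa (S n) * sb n - sa n * sb (S n) = 1.
Proof. rewrite sa_S, sb_S. unfold sa, sb. rewrite <- (mdet_An n). unfold mdet. ring. Qed.

Lemma Pk_entries k :
  m11 (Pk v alpha x E k) = ssum (fun n => sa (S n) ^ 2) (2 * k) /\
  m12 (Pk v alpha x E k) = ssum (fun n => sa (S n) * sb (S n)) (2 * k) /\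
  m21 (Pk v alpha x E k) = ssum (fun n => sa (S n) * sb (S n)) (2 * k) /\
  m22 (Pk v alpha x E k) = ssum (fun n => sb (S n) ^ 2) (2 * k).
Proof.
  induction k as [|k IH]; [simpl; repeat split; reflexivity|].
  destruct IH as (H1 & H2 & H3 & H4).
  set (T := An v alpha E (2 * k + 1) (x + alpha)).
  change (Pk v alpha x E (S k)) with (madd (Pk v alpha x E k) (mmul (madj T) T)).
  assert (E1 : m11 T = sa (S (S (2 * k)))) by (rewrite sa_S; unfold T; f_equal; f_equal; lia).
  assert (E2 : m21 T = sa (S (2 * k))) by (unfold sa, T; f_equal; f_equal; lia).
  assert (E3 : m12 T = sb (S (S (2 * k)))) by (rewrite sb_S; unfold T; f_equal; f_equal; lia).
  assert (E4 : m22 T = sb (S (2 * k))) by (unfold sb, T; f_equal; f_equal; lia).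
  replace (2 * S k)%nat with (S (S (2 * k))) by lia.
  cbn [madd mmul madj m11 m12 m21 m22 ssum].
  rewrite H1, H2, H3, H4, E1, E2, E3, E4.
  repeat split; ring.
Qed.
End Seq.

Section Sol.
Variables (v : R -> R) (alpha x E eps : R) (u : Z -> C).
Hypothesis Hsol : solves v alpha x (E, eps) u.
Definition pp n := fst (u (Z.of_nat n)).
Definition qq n := snd (u (Z.of_nat n)).

Lemma rec_pq n :
  pp (S (S n)) = (E - ve v alpha x (S n)) * pp (S n) - pp n - eps * qq (S n) /\
  qq (S (S n)) = (E - ve v alpha x (S n)) * qq (S n) - qq n + eps * pp (S n).
Proof.
  pose proof (Hsol (Z.of_nat (S n))) as H.
  replace (Z.of_nat (S n) + 1)%Z with (Z.of_nat (S (S n))) in H by lia.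
  replace (Z.of_nat (S n) - 1)%Z with (Z.of_nat n) in H by lia.
  rewrite <- INR_IZR_INZ in H.
  unfold pp, qq, ve.
  destruct (u (Z.of_nat (S (S n)))) as [a1 a2].
  destruct (u (Z.of_nat n)) as [b1 b2].
  destruct (u (Z.of_nat (S n))) as [c1 c2].
  simpl. injection H; intros Hi Hr. split; lra.
Qed.

Definition JJ n := qq (S n) * pp n - pp (S n) * qq n.
Lemma green M : eps * ssum (fun n => pp (S n) ^ 2 + qq (S n) ^ 2) M = JJ M - JJ 0.
Proof.
  induction M; [rewrite ssum_0; unfold JJ; ring|]. rewrite ssum_S.
  transitivity (eps * ssum (fun n => pp (S n) ^ 2 + qq (S n) ^ 2) M + eps * (pp (S M) ^ 2 + qq (S M) ^ 2)); [ring|].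
  rewrite IHM. unfold JJ.
  destruct (rec_pq M) as [H1 H2]. rewrite H1, H2. ring.
Qed.
End Sol.

Lemma uniq2 (c h X Y : nat -> R) :
  (forall n, X (S (S n)) = c n * X (S n) - X n + h n) ->
  (forall n, Y (S (S n)) = c n * Y (S n) - Y n + h n) ->
  X 0%nat = Y 0%nat -> X 1%nat = Y 1%nat -> forall n, X n = Y n.
Proof.
  intros HX HY H0 H1.
  assert (forall n, X n = Y n /\ X (S n) = Y (S n)).
  { induction n; [auto|]. destruct IHn as [A B]. split; auto.
    rewrite HX, HY, A, B. reflexivity. }
  intros n; apply H.
Qed.

Section VC.
Variables (v : R -> R) (alpha x E : R).
Definition Kf n j := sa v alpha x E n * sb v alpha x E j - sa v alpha x E j * sb v alpha x E n.
Definition Dg (g : nat -> R) n := ssum (fun j => Kf n (S j) * g (S j)) n.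

Lemma Kf_rec n j : Kf (S (S n)) j = (E - ve v alpha x (S n)) * Kf (S n) j - Kf n j.
Proof. unfold Kf. rewrite sa_rec, sb_rec. ring. Qed.

Lemma Dg_rec g n : Dg g (S (S n)) = (E - ve v alpha x (S n)) * Dg g (S n) - Dg g n + g (S n).
Proof.
  unfold Dg.
  rewrite (ssum_ext _ (fun j => (E - ve v alpha x (S n)) * (Kf (S n) (S j) * g (S j)) + (-1) * (Kf n (S j) * g (S j))))
    by (intros; rewrite Kf_rec; ring).
  rewrite ssum_plus, !ssum_scal.
  rewrite (ssum_S (fun j => Kf (S n) (S j) * g (S j)) (S n)).
  rewrite !(ssum_S (fun j => Kf n (S j) * g (S j))).
  pose proof (wronsk v alpha x E n) as W.
  pose proof (Kf_rec n (S (S n))) as K2.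
  assert (K0 : Kf (S (S n)) (S (S n)) = 0) by (unfold Kf; ring).
  assert (K1 : Kf n (S n) = -1) by (unfold Kf; lra).
  rewrite K1. nra.
Qed.

Lemma Dg0 g : Dg g 0 = 0. Proof. reflexivity. Qed.
Lemma Dg1 g : Dg g 1 = 0. Proof. unfold Dg; rewrite ssum_S, ssum_0; unfold Kf; ring. Qed.

Lemma Dg_bound g n N : (n <= N)%nat ->
  (Dg g n) ^ 2 <= ssum (fun j => (Kf n (S j)) ^ 2) N * ssum (fun j => (g (S j)) ^ 2) N.
Proof.
  intros HnN. unfold Dg.
  eapply Rle_trans; [apply cauchy_schwarz|].
  apply Rmult_le_compat; try (apply ssum_nonneg; intros; apply pow2_ge_0);
    apply ssum_mono; auto; intros; apply pow2_ge_0.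
Qed.

Variables (eps : R) (u : Z -> C).
Hypothesis Hsol : solves v alpha x (E, eps) u.

Definition dp n := pp u n - (pp u 1 * sa v alpha x E n + pp u 0 * sb v alpha x E n).
Definition dq n := qq u n - (qq u 1 * sa v alpha x E n + qq u 0 * sb v alpha x E n).

Lemma dp_eq n : dp n = - eps * Dg (qq u) n.
Proof.
  apply (uniq2 (fun n => E - ve v alpha x (S n)) (fun n => - eps * qq u (S n)) dp (fun n => - eps * Dg (qq u) n)).
  - intros k. unfold dp. destruct (rec_pq v alpha x E eps u Hsol k) as [H1 _].
    rewrite H1, sa_rec, sb_rec. ring.
  - intros k. rewrite Dg_rec. ring.
  - unfold dp. rewrite Dg0, sa0, sb0. ring.
  - unfold dp. rewrite Dg1, sa1, sb1. ring.
Qed.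

Lemma dq_eq n : dq n = eps * Dg (pp u) n.
Proof.
  apply (uniq2 (fun n => E - ve v alpha x (S n)) (fun n => eps * pp u (S n)) dq (fun n => eps * Dg (pp u) n)).
  - intros k. unfold dq. destruct (rec_pq v alpha x E eps u Hsol k) as [_ H2].
    rewrite H2, sa_rec, sb_rec. ring.
  - intros k. rewrite Dg_rec. ring.
  - unfold dq. rewrite Dg0, sa0, sb0. ring.
  - unfold dq. rewrite Dg1, sa1, sb1. ring.
Qed.

Definition SS N := ssum (fun n => pp u (S n) ^ 2 + qq u (S n) ^ 2) N.

Lemma d_bound N :
  ssum (fun n => dp (S n) ^ 2 + dq (S n) ^ 2) N <=
  eps ^ 2 * (2 * (ssum (fun i => sa v alpha x E (S i) ^2) N * ssum (fun i => sb v alpha x E (S i) ^2) N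
       - ssum (fun i => sa v alpha x E (S i) * sb v alpha x E (S i)) N * ssum (fun i => sa v alpha x E (S i) * sb v alpha x E (S i)) N)) * SS N.
Proof.
  transitivity (ssum (fun n => eps ^ 2 * (ssum (fun j => Kf (S n) (S j) ^ 2) N * SS N)) N).
  - apply ssum_le. intros n Hn.
    rewrite dp_eq, dq_eq.
    pose proof (Dg_bound (qq u) (S n) N ltac:(lia)) as B1.
    pose proof (Dg_bound (pp u) (S n) N ltac:(lia)) as B2.
    unfold SS. rewrite ssum_plus.
    assert (0 <= eps ^ 2) by apply pow2_ge_0.
    replace ((- eps * Dg (qq u) (S n)) ^ 2 + (eps * Dg (pp u) (S n)) ^ 2)
      with (eps ^ 2 * (Dg (qq u) (S n) ^ 2 + Dg (pp u) (S n) ^ 2)) by ring.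
    apply Rmult_le_compat_l; auto. lra.
  - right. rewrite <- (lagrange (fun i => sa v alpha x E (S i)) (fun i => sb v alpha x E (S i))).
    rewrite ssum_scal, ssum_mulr, Rmult_assoc. f_equal.
Qed.
End VC.

Lemma Cmod_sq (z : C) : Cmod z ^ 2 = fst z ^ 2 + snd z ^ 2.
Proof. unfold Cmod. apply pow2_sqrt. nra. Qed.

Section Main.
Variables (v : R -> R) (alpha x E eps : R) (u : Z -> C).
Hypothesis Hsol : solves v alpha x (E, eps) u.
Hypothesis Heps : 0 < eps.
Hypothesis Hl2 : l2_at_plus_infty u.

Definition tt := pp u 1 * qq u 0 - qq u 1 * pp u 0.

Lemma green_bound N : eps * SS u N <= tt.
Proof.
  destruct (Rle_dec (eps * SS u N) tt) as [h|h]; auto. exfalso.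
  set (dl := eps * SS u N - tt).
  assert (Hd : 0 < dl) by (unfold dl; lra).
  pose proof (ex_series_lim_0 _ Hl2) as L.
  apply is_lim_seq_spec in L. destruct (L (mkposreal dl Hd)) as [M0 HM0]. change (pos (mkposreal dl Hd)) with dl in HM0.
  set (M := (M0 + N)%nat).
  pose proof (HM0 M ltac:(unfold M; lia)) as c1.
  pose proof (HM0 (S M) ltac:(unfold M; lia)) as c2.
  rewrite Rminus_0_r, Cmod_sq in c1, c2.
  rewrite Rabs_pos_eq in c1, c2 by nra.
  pose proof (green v alpha x E eps u Hsol M) as G.
  assert (HJ : JJ u M <= (pp u (S M) ^ 2 + qq u (S M) ^ 2 + pp u M ^ 2 + qq u M ^ 2) / 2).
  { unfold JJ. pose proof (pow2_ge_0 (qq u (S M) - pp u M)). pose proof (pow2_ge_0 (pp u (S M) + qq u M)). lra. }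
  assert (HJ0 : JJ u 0 = - tt) by (unfold JJ, tt; simpl; ring).
  assert (Hm : SS u N <= SS u M).
  { unfold SS. apply ssum_mono; [intros; nra| unfold M; lia]. }
  unfold pp, qq in HJ. fold (SS u M) in G.
  assert (eps * SS u N <= eps * SS u M) by (apply Rmult_le_compat_l; lra).
  unfold dl in *. lra.
Qed.
End Main.

Lemma zero_prop v alpha x z (u : Z -> C) : solves v alpha x z u ->
  u 1%Z = 0%C -> u 2%Z = 0%C -> forall n, u n = 0%C.
Proof.
  intros Hs H1 H2.
  assert (Q : forall n, u (n + 1)%Z = 0%C /\ u (n + 2)%Z = 0%C).
  { apply Z.peano_ind.
    - simpl; auto.
    - intros n [A B]. split.
      + replace (Z.succ n + 1)%Z with (n + 2)%Z by lia. auto.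
      + pose proof (Hs (n + 2)%Z) as H.
        replace (n + 2 - 1)%Z with (n + 1)%Z in H by lia.
        replace (n + 2 + 1)%Z with (Z.succ n + 2)%Z in H by lia.
        rewrite A, B, Cmult_0_r, !Cplus_0_r, Cmult_0_r in H. exact H.
    - intros n [A B]. split.
      + pose proof (Hs (n + 1)%Z) as H.
        replace (n + 1 - 1)%Z with (Z.pred n + 1)%Z in H by lia.
        replace (n + 1 + 1)%Z with (n + 2)%Z in H by lia.
        rewrite A, B, Cmult_0_r, Cmult_0_r, Cplus_0_l, Cplus_0_r in H. exact H.
      + replace (Z.pred n + 2)%Z with (n + 1)%Z by lia. auto. }
  intros n. destruct (Q (n - 1)%Z) as [A _]. replace (n - 1 + 1)%Z with n in A by lia. exact A.
Qed.

Section Main2.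
Variables (v : R -> R) (alpha x E eps : R) (u : Z -> C) (N : nat).
Hypothesis Hsol : solves v alpha x (E, eps) u.

Definition AA := ssum (fun i => sa v alpha x E (S i) ^ 2) N.
Definition BB := ssum (fun i => sb v alpha x E (S i) ^ 2) N.
Definition CC := ssum (fun i => sa v alpha x E (S i) * sb v alpha x E (S i)) N.
Definition php n := pp u 1 * sa v alpha x E n + pp u 0 * sb v alpha x E n.
Definition phq n := qq u 1 * sa v alpha x E n + qq u 0 * sb v alpha x E n.
Definition ff := ssum (fun n => php (S n) ^ 2 + phq (S n) ^ 2) N.

Lemma ff_expand : ff = pp u 1 ^ 2 * AA + 2 * (pp u 1 * pp u 0) * CC + pp u 0 ^ 2 * BB
                   + (qq u 1 ^ 2 * AA + 2 * (qq u 1 * qq u 0) * CC + qq u 0 ^ 2 * BB).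
Proof.
  unfold ff, AA, BB, CC. rewrite <- !ssum_scal. rewrite <- !ssum_plus.
  apply ssum_ext; intros. unfold php, phq. ring.
Qed.

Lemma ff_bound : ff <= 2 * SS u N + 2 * ssum (fun n => dp v alpha x E u (S n) ^ 2 + dq v alpha x E u (S n) ^ 2) N.
Proof.
  unfold ff, SS. rewrite <- !ssum_scal, <- ssum_plus. apply ssum_le; intros.
  unfold dp, dq, php, phq.
  set (a1 := pp u (S i)). set (a2 := pp u 1 * sa v alpha x E (S i) + pp u 0 * sb v alpha x E (S i)).
  set (b1 := qq u (S i)). set (b2 := qq u 1 * sa v alpha x E (S i) + qq u 0 * sb v alpha x E (S i)).
  pose proof (pow2_ge_0 (2 * a1 - a2)). pose proof (pow2_ge_0 (2 * b1 - b2)). lra.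
Qed.
End Main2.

Lemma lub_finite (Es : R -> Prop) M r0 : (forall r, Es r -> r <= M) -> Es r0 ->
  exists l, Lub_Rbar Es = Finite l /\ r0 <= l /\ l <= M.
Proof.
  intros HM H0. pose proof (Lub_Rbar_correct Es) as [H1 H2].
  assert (Hub : is_ub_Rbar Es (Finite M)) by (intros r Hr; simpl; auto).
  specialize (H2 _ Hub). specialize (H1 _ H0).
  destruct (Lub_Rbar Es) as [l| |]; simpl in *; try contradiction.
  exists l; auto.
Qed.

Lemma opnorm_bounds A Cc B : 0 < A -> 0 < B -> Cc ^ 2 <= A * B ->
  exists o, opnorm (M2 A Cc Cc B) = Finite o /\ (A + B) / 2 <= o /\ o <= A + B.
Proof.
  intros HA HB HC.
  assert (Hup : forall r, (exists w1 w2 : R, w1 ^ 2 + w2 ^ 2 = 1 /\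
     r = sqrt ((m11 (M2 A Cc Cc B) * w1 + m12 (M2 A Cc Cc B) * w2) ^ 2 + (m21 (M2 A Cc Cc B) * w1 + m22 (M2 A Cc Cc B) * w2) ^ 2)) -> r <= A + B).
  { intros r (w1 & w2 & Hw & ->). simpl.
    rewrite <- (sqrt_pow2 (A + B)) by lra. apply sqrt_le_1_alt.
    assert (E1 : (A ^ 2 + Cc ^ 2) * (w1 ^ 2 + w2 ^ 2) = A ^ 2 + Cc ^ 2) by (rewrite Hw; ring).
    assert (E2 : (Cc ^ 2 + B ^ 2) * (w1 ^ 2 + w2 ^ 2) = Cc ^ 2 + B ^ 2) by (rewrite Hw; ring).
    pose proof (pow2_ge_0 (A * w2 - Cc * w1)). pose proof (pow2_ge_0 (Cc * w2 - B * w1)).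
    assert (A * B <= A * B) by lra. lra. }
  destruct (Rle_dec B A) as [h|h].
  - destruct (lub_finite _ _ (sqrt (A ^ 2 + Cc ^ 2)) Hup) as (o & Ho & H1 & H2).
    { exists 1, 0. split; [ring|]. simpl. f_equal. ring. }
    exists o. split; auto. split; auto.
    assert (A <= sqrt (A ^ 2 + Cc ^ 2)).
    { rewrite <- (sqrt_pow2 A) at 1 by lra. apply sqrt_le_1_alt. pose proof (pow2_ge_0 Cc). lra. }
    lra.
  - destruct (lub_finite _ _ (sqrt (Cc ^ 2 + B ^ 2)) Hup) as (o & Ho & H1 & H2).
    { exists 0, 1. split; [ring|]. simpl. f_equal. ring. }
    exists o. split; auto. split; auto.
    assert (B <= sqrt (Cc ^ 2 + B ^ 2)).
    { rewrite <- (sqrt_pow2 B) at 1 by lra. apply sqrt_le_1_alt. pose proof (pow2_ge_0 Cc). lra. }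
    lra.
Qed.

Lemma zb_mod mx my beta : 0 < my ->
  let c := cos beta in let s := sin beta in
  Cmod (z_beta (mx, my) beta) =
  sqrt ((c * mx + s) ^ 2 + (c * my) ^ 2) / sqrt ((- s * mx + c) ^ 2 + (s * my) ^ 2).
Proof.
  intros Hmy c s.
  unfold z_beta, mobius, Rot. cbn [m11 m12 m21 m22].
  replace (2 * PI * (- beta / (2 * PI))) with (- beta) by (field; apply PI_neq0).
  rewrite cos_neg, sin_neg, Ropp_involutive. fold c s.
  pose proof (sin2_cos2 beta) as cs. fold c s in cs. unfold Rsqr in cs.
  rewrite Cmod_div.
  - unfold Cmod. cbn. f_equal; f_equal; ring.
  - intros H. injection H. intros H2 H1.
    assert (s = 0).
    { assert (s * my = 0) by lra. destruct (Rmult_integral _ _ H0); auto; lra. }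
    rewrite H0 in H1, cs. assert (c = 0) by lra. rewrite H3 in cs. lra.
Qed.

Lemma psi_bounds mx my : 0 < my ->
  exists ps, psi (mx, my) = Finite ps /\
    (1 + mx ^ 2 + my ^ 2) / my / 2 <= ps /\ ps <= (1 + mx ^ 2 + my ^ 2) / my.
Proof.
  intros Hmy. set (F := (1 + mx ^ 2 + my ^ 2) / my).
  assert (HF : F * my = 1 + mx ^ 2 + my ^ 2) by (unfold F; field; lra).
  assert (HF0 : 0 < F) by (unfold F; apply Rdiv_lt_0_compat; [pose proof (pow2_ge_0 mx); pose proof (pow2_ge_0 my)|]; lra).
  assert (Hup : forall r, (exists beta : R, r = Cmod (z_beta (mx, my) beta)) -> r <= F).
  { intros r [beta ->]. rewrite zb_mod by auto.
    set (c := cos beta). set (s := sin beta).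
    pose proof (sin2_cos2 beta) as cs. fold c s in cs. unfold Rsqr in cs.
    set (Na := (c * mx + s) ^ 2 + (c * my) ^ 2).
    set (Nb := (- s * mx + c) ^ 2 + (s * my) ^ 2).
    assert (Hsum : Na + Nb = 1 + mx ^ 2 + my ^ 2).
    { transitivity ((s * s + c * c) * (1 + mx ^ 2 + my ^ 2)); [unfold Na, Nb; ring|rewrite cs; ring]. }
    assert (Hprod : Na * Nb = ((c * mx + s) * (- s * mx + c) - c * s * my ^ 2) ^ 2 + my ^ 2 * (s * s + c * c) ^ 2)
      by (unfold Na, Nb; ring).
    rewrite cs in Hprod.
    assert (HNa : 0 <= Na) by (unfold Na; pose proof (pow2_ge_0 (c * mx + s)); pose proof (pow2_ge_0 (c * my)); lra).
    assert (HNb : 0 <= Nb) by (unfold Nb; pose proof (pow2_ge_0 (- s * mx + c)); pose proof (pow2_ge_0 (s * my)); lra).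
    assert (HP : my ^ 2 <= Na * Nb) by (rewrite Hprod; pose proof (pow2_ge_0 ((c * mx + s) * (- s * mx + c) - c * s * my ^ 2)); lra).
    assert (HNb0 : 0 < Nb).
    { destruct HNb as [h|h]; auto. rewrite <- h in HP. rewrite Rmult_0_r in HP.
      pose proof (pow_lt my 2 Hmy). lra. }
    assert (Key : Na * my ^ 2 <= F ^ 2 * my ^ 2 * Nb).
    { replace (F ^ 2 * my ^ 2) with ((F * my) ^ 2) by ring. rewrite HF, <- Hsum.
      apply Rle_trans with (Na * (Na * Nb)); [apply Rmult_le_compat_l; auto|].
      replace (Na * (Na * Nb)) with (Na ^ 2 * Nb) by ring.
      apply Rmult_le_compat_r; auto. apply pow_incr; lra. }
    assert (Key2 : Na <= F ^ 2 * Nb).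
    { apply Rmult_le_reg_r with (my ^ 2); [apply pow_lt; auto|]. lra. }
    assert (Hs : 0 < sqrt Nb) by (apply sqrt_lt_R0; auto).
    apply Rmult_le_reg_r with (sqrt Nb); auto.
    unfold Rdiv. rewrite Rmult_assoc, Rinv_l, Rmult_1_r by lra.
    rewrite <- (sqrt_pow2 F) by lra. rewrite <- sqrt_mult by (try apply pow2_ge_0; lra).
    apply sqrt_le_1_alt. exact Key2. }
  assert (E0 : exists beta, Cmod (z_beta (mx, my) 0) = Cmod (z_beta (mx, my) beta)) by (exists 0; auto).
  assert (L0 : my <= Cmod (z_beta (mx, my) 0)).
  { rewrite zb_mod by auto. rewrite cos_0, sin_0.
    replace ((1 * mx + 0) ^ 2 + (1 * my) ^ 2) with (mx ^ 2 + my ^ 2) by ring.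
    replace ((- 0 * mx + 1) ^ 2 + (0 * my) ^ 2) with 1 by ring. rewrite sqrt_1, Rdiv_1_r.
    rewrite <- (sqrt_pow2 my) at 1 by lra. apply sqrt_le_1_alt. pose proof (pow2_ge_0 mx). lra. }
  set (b1 := PI / 2 - atan mx).
  assert (L1 : (1 + mx ^ 2) / my <= Cmod (z_beta (mx, my) b1)).
  { rewrite zb_mod by auto. unfold b1. rewrite cos_shift, sin_shift, sin_atan, cos_atan.
    set (r := sqrt (1 + mx²)).
    assert (Hr : 0 < r) by (apply sqrt_lt_R0; unfold Rsqr; pose proof (pow2_ge_0 mx); nra).
    assert (Hr2 : r * r = 1 + mx ^ 2) by (unfold r; rewrite sqrt_sqrt; unfold Rsqr; [ring|nra]).
    replace (- (1 / r) * mx + mx / r) with 0 by (field; lra).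
    replace ((mx / r * mx + 1 / r) ^ 2 + (mx / r * my) ^ 2) with (r ^ 2 + (mx * my / r) ^ 2).
    2:{ assert (Hq : mx / r * mx + 1 / r = r).
        { replace (mx / r * mx + 1 / r) with ((1 + mx ^ 2) / r) by (field; lra). rewrite <- Hr2. field; lra. }
        rewrite Hq. f_equal. f_equal. field; lra. }
    replace ((0) ^ 2 + (1 / r * my) ^ 2) with ((my / r) ^ 2) by (field; lra).
    rewrite sqrt_pow2 by (apply Rlt_le, Rdiv_lt_0_compat; lra).
    assert (r ^ 2 <= r ^ 2 + (mx * my / r) ^ 2) by (pose proof (pow2_ge_0 (mx * my / r)); lra).
    assert (r <= sqrt (r ^ 2 + (mx * my / r) ^ 2)).
    { rewrite <- (sqrt_pow2 r) at 1 by lra. apply sqrt_le_1_alt; auto. }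
    replace (1 + mx ^ 2) with (r * r) by exact Hr2.
    unfold Rdiv at 2. rewrite Rinv_div.
    replace (r * r / my) with (r * (r / my)) by (field; lra).
    apply Rmult_le_compat_r; [apply Rlt_le, Rdiv_lt_0_compat; lra| exact H0]. }
  destruct (Rle_dec (1 + mx ^ 2) (my ^ 2)) as [h|h].
  - destruct (lub_finite _ F _ Hup E0) as (ps & Hps & H1 & H2).
    exists ps. split; [exact Hps|]. fold F. split; auto.
    assert (F <= 2 * my).
    { apply Rmult_le_reg_r with my; auto. rewrite HF. nra. }
    lra.
  - assert (E1 : exists beta, Cmod (z_beta (mx, my) b1) = Cmod (z_beta (mx, my) beta)) by (exists b1; auto).
    destruct (lub_finite _ F _ Hup E1) as (ps & Hps & H1 & H2).
    exists ps. split; [exact Hps|]. fold F. split; auto.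
    assert (F <= 2 * ((1 + mx ^ 2) / my)).
    { apply Rmult_le_reg_r with my; auto. rewrite HF.
      replace (2 * ((1 + mx ^ 2) / my) * my) with (2 * (1 + mx ^ 2)) by (field; lra). lra. }
    lra.
Qed.

Lemma ssum_term f n i : (forall j, 0 <= f j) -> (i < n)%nat -> f i <= ssum f n.
Proof.
  intros H Hi. induction n; [lia|]. rewrite ssum_S.
  destruct (Nat.eq_dec i n) as [->|h].
  - pose proof (ssum_nonneg f n H). lra.
  - specialize (IHn ltac:(lia)). specialize (H n). lra.
Qed.

Lemma sq0 r : r ^ 2 = 0 -> r = 0.
Proof. intros H. apply Rsqr_0_uniq. unfold Rsqr. replace (r * r) with (r ^ 2) by ring. exact H. Qed.

Lemma mof_eq (u : Z -> C) :
  let p1 := fst (u 1%Z) in let q1 := snd (u 1%Z) in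
  let p0 := fst (u 0%Z) in let q0 := snd (u 0%Z) in
  0 < p0 ^ 2 + q0 ^ 2 ->
  m_of u = (- (p1 * p0 + q1 * q0) / (p0 ^ 2 + q0 ^ 2), (p1 * q0 - q1 * p0) / (p0 ^ 2 + q0 ^ 2)).
Proof.
  intros p1 q1 p0 q0 H. unfold m_of.
  rewrite (surjective_pairing (u 1%Z)), (surjective_pairing (u 0%Z)). fold p1 q1 p0 q0.
  unfold Cdiv, Cinv, Cmult, Copp. cbn [fst snd]. f_equal; field; lra.
Qed.

Lemma quad_ineq A B C p1 p0 q1 q0 : 0 < A -> 0 < B -> 0 < A * B - C * C ->
  let f1 := A * p1 ^ 2 + 2 * C * p1 * p0 + B * p0 ^ 2 in
  let f2 := A * q1 ^ 2 + 2 * C * q1 * q0 + B * q0 ^ 2 in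
  let g1 := B * p1 ^ 2 - 2 * C * p1 * p0 + A * p0 ^ 2 in
  let g2 := B * q1 ^ 2 - 2 * C * q1 * q0 + A * q0 ^ 2 in
  ((A + B) * (p1 * q0 - q1 * p0)) ^ 2 <= 2 * ((f1 + f2) * (g1 + g2)).
Proof.
  intros HA HB HD f1 f2 g1 g2.
  set (D := A * B - C * C).
  assert (HD' : 0 < D) by (unfold D; lra).
  set (X := (A * p1 + C * p0) * (- q0) + (C * p1 + B * p0) * q1).
  set (Y := (- p0) * (A * q1 + C * q0) + p1 * (C * q1 + B * q0)).
  assert (HXY : ((A + B) * (p1 * q0 - q1 * p0)) ^ 2 = (X - Y) ^ 2) by (unfold X, Y; ring).
  assert (HX : f1 * g2 - X ^ 2 = D * (p1 * q1 + p0 * q0) ^ 2) by (unfold f1, g2, X, D; ring).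
  assert (HY : g1 * f2 - Y ^ 2 = D * (p0 * q0 + p1 * q1) ^ 2) by (unfold g1, f2, Y, D; ring).
  assert (Hf1 : A * f1 = (A * p1 + C * p0) ^ 2 + D * p0 ^ 2) by (unfold f1, D; ring).
  assert (Hf2 : A * f2 = (A * q1 + C * q0) ^ 2 + D * q0 ^ 2) by (unfold f2, D; ring).
  assert (Hg1 : A * g1 = (A * p0 - C * p1) ^ 2 + D * p1 ^ 2) by (unfold g1, D; ring).
  assert (Hg2 : A * g2 = (A * q0 - C * q1) ^ 2 + D * q1 ^ 2) by (unfold g2, D; ring).
  assert (pos : forall z w, 0 <= w ^ 2 + D * z ^ 2).
  { intros. pose proof (pow2_ge_0 w). pose proof (pow2_ge_0 z).
    assert (0 <= D * z ^ 2) by (apply Rmult_le_pos; lra). lra. }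
  assert (F1 : 0 <= f1) by (apply Rmult_le_reg_l with A; auto; rewrite Rmult_0_r, Hf1; apply pos).
  assert (F2 : 0 <= f2) by (apply Rmult_le_reg_l with A; auto; rewrite Rmult_0_r, Hf2; apply pos).
  assert (G1 : 0 <= g1) by (apply Rmult_le_reg_l with A; auto; rewrite Rmult_0_r, Hg1; apply pos).
  assert (G2 : 0 <= g2) by (apply Rmult_le_reg_l with A; auto; rewrite Rmult_0_r, Hg2; apply pos).
  assert (X2 : X ^ 2 <= f1 * g2).
  { assert (0 <= D * (p1 * q1 + p0 * q0) ^ 2) by (apply Rmult_le_pos; [lra|apply pow2_ge_0]). lra. }
  assert (Y2 : Y ^ 2 <= g1 * f2).
  { assert (0 <= D * (p0 * q0 + p1 * q1) ^ 2) by (apply Rmult_le_pos; [lra|apply pow2_ge_0]). lra. }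
  rewrite HXY. pose proof (pow2_ge_0 (X + Y)).
  assert (0 <= f1 * g1) by (apply Rmult_le_pos; auto).
  assert (0 <= f2 * g2) by (apply Rmult_le_pos; auto).
  lra.
Qed.

Theorem lemma4p2 :
  forall alpha : R, irrational alpha ->
  exists Cst : R, 0 < Cst /\
  forall (v : R -> R), one_periodic v -> real_analytic v ->
  forall (x E : R) (k : nat), (1 <= k)%nat ->
  forall eps : R, 0 < eps ->
  mdet (Pk v alpha x E k) = 1 / (4 * eps ^ 2) ->
  forall u : Z -> C,
    solves v alpha x (E, eps) u -> nonzero_seq u -> l2_at_plus_infty u ->
    Rbar_lt (Rbar_mult (/ Cst * (2 * eps)) (opnorm (Pk v alpha x E k)))
            (psi (m_of u)) /\
    Rbar_lt (psi (m_of u))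
            (Rbar_mult (Cst * (2 * eps)) (opnorm (Pk v alpha x E k))).
Proof.
  intros alpha _. exists 25. split; [lra|].
  intros v _ _ x E k Hk eps Heps Hdet u Hsol Hnz Hl2.
  set (N := (2 * k)%nat).
  destruct (Pk_entries v alpha x E k) as (P1 & P2 & P3 & P4).
  fold N in P1, P2, P3, P4.
  fold (AA v alpha x E N) in P1. fold (CC v alpha x E N) in P2, P3. fold (BB v alpha x E N) in P4.
  set (A := AA v alpha x E N) in *. set (B := BB v alpha x E N) in *. set (C := CC v alpha x E N) in *.
  assert (HPk : Pk v alpha x E k = M2 A C C B).
  { rewrite <- P1, <- P2, <- P4. rewrite P2 at 2. rewrite <- P3. destruct (Pk v alpha x E k); reflexivity. }
  rewrite HPk. rewrite HPk in Hdet. unfold mdet in Hdet; cbn [m11 m12 m21 m22] in Hdet.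
  assert (HD : (A * B - C * C) * (4 * eps ^ 2) = 1).
  { rewrite Hdet. field. lra. }
  assert (He2 : 0 < eps ^ 2) by (apply pow_lt; lra).
  assert (HDpos : 0 < A * B - C * C).
  { rewrite Hdet. apply Rdiv_lt_0_compat; lra. }
  assert (HA0 : 0 <= A) by (unfold A, AA; apply ssum_nonneg; intros; apply pow2_ge_0).
  assert (HB0 : 0 <= B) by (unfold B, BB; apply ssum_nonneg; intros; apply pow2_ge_0).
  assert (HA : 0 < A).
  { destruct HA0 as [h|h]; auto. rewrite <- h in HDpos. pose proof (pow2_ge_0 C). lra. }
  assert (HB : 0 < B).
  { destruct HB0 as [h|h]; auto. rewrite <- h in HDpos. pose proof (pow2_ge_0 C). lra. }
  pose proof (d_bound v alpha x E eps u Hsol N) as Hd.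
  fold (AA v alpha x E N) (BB v alpha x E N) (CC v alpha x E N) in Hd.
  pose proof (ff_bound v alpha x E u N) as Hf.
  pose proof (ff_expand v alpha x E u N) as Hfe. fold A B C in Hfe.
  pose proof (green_bound v alpha x E eps u Hsol Heps Hl2 N) as Hg.
  set (S0 := SS u N) in *.
  set (ff0 := ff v alpha x E u N) in *.
  set (dd := ssum (fun n => dp v alpha x E u (S n) ^ 2 + dq v alpha x E u (S n) ^ 2) N) in *.
  assert (HS0 : 0 <= S0) by (unfold S0, SS; apply ssum_nonneg; intros; pose proof (pow2_ge_0 (pp u (S i))); pose proof (pow2_ge_0 (qq u (S i))); lra).
  assert (Hdd : dd <= S0 / 2).
  { eapply Rle_trans; [exact Hd|]. right.
    change (AA v alpha x E N) with A. change (BB v alpha x E N) with B. change (CC v alpha x E N) with C.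
    change (SS u N) with S0.
    replace (eps ^ 2 * (2 * (A * B - C * C))) with ((A * B - C * C) * (4 * eps ^ 2) / 2) by field.
    rewrite HD. field. }
  assert (Hff : eps * ff0 <= 3 * tt u).
  { assert (ff0 <= 3 * S0) by lra.
    apply Rle_trans with (eps * (3 * S0)); [apply Rmult_le_compat_l; lra| lra]. }
  assert (HSpos : 0 < S0).
  { destruct HS0 as [h|h]; auto. exfalso.
    set (g := fun n => pp u (S n) ^ 2 + qq u (S n) ^ 2).
    assert (gnn : forall j, 0 <= g j) by (intros; unfold g; pose proof (pow2_ge_0 (pp u (S j))); pose proof (pow2_ge_0 (qq u (S j))); lra).
    assert (T0 := ssum_term g N 0 gnn ltac:(unfold N; lia)).
    assert (T1 := ssum_term g N 1 gnn ltac:(unfold N; lia)).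
    change (ssum g N) with S0 in T0, T1. rewrite <- h in T0, T1. unfold g in T0, T1.
    pose proof (pow2_ge_0 (pp u 1)). pose proof (pow2_ge_0 (qq u 1)).
    pose proof (pow2_ge_0 (pp u 2)). pose proof (pow2_ge_0 (qq u 2)).
    assert (a1 : pp u 1 = 0) by (apply sq0; lra).
    assert (b1 : qq u 1 = 0) by (apply sq0; lra).
    assert (a2 : pp u 2 = 0) by (apply sq0; lra).
    assert (b2 : qq u 2 = 0) by (apply sq0; lra).
    assert (U1 : u 1%Z = 0%C).
    { rewrite (surjective_pairing (u 1%Z)). change (fst (u 1%Z)) with (pp u 1). change (snd (u 1%Z)) with (qq u 1).
      rewrite a1, b1. reflexivity. }
    assert (U2 : u 2%Z = 0%C).
    { rewrite (surjective_pairing (u 2%Z)). change (fst (u 2%Z)) with (pp u 2). change (snd (u 2%Z)) with (qq u 2).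
      rewrite a2, b2. reflexivity. }
    destruct Hnz as [n Hn]. apply Hn. apply (zero_prop v alpha x (E, eps) u Hsol U1 U2). }
  assert (Htt : 0 < tt u).
  { assert (0 < eps * S0) by (apply Rmult_lt_0_compat; lra). lra. }
  unfold tt in Htt, Hff.
  set (p1 := pp u 1) in *. set (q1 := qq u 1) in *. set (p0 := pp u 0) in *. set (q0 := qq u 0) in *.
  set (t := p1 * q0 - q1 * p0) in *.
  assert (Hn0 : 0 < p0 ^ 2 + q0 ^ 2).
  { pose proof (pow2_ge_0 p0). pose proof (pow2_ge_0 q0).
    destruct (Rle_lt_or_eq_dec 0 (p0 ^ 2 + q0 ^ 2)) as [h|h]; [lra|auto|].
    assert (p0 = 0) by (apply sq0; lra). assert (q0 = 0) by (apply sq0; lra).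
    unfold t in Htt. rewrite H1, H2 in Htt. lra. }
  set (n0 := p0 ^ 2 + q0 ^ 2) in *.
  set (mx := - (p1 * p0 + q1 * q0) / n0). set (my := t / n0).
  assert (Hm : m_of u = (mx, my)) by exact (mof_eq u Hn0).
  rewrite Hm.
  assert (Hmy : 0 < my) by (unfold my; apply Rdiv_lt_0_compat; lra).
  destruct (psi_bounds mx my Hmy) as (ps & Hps & Hps1 & Hps2).
  rewrite Hps.
  assert (HC2 : C ^ 2 <= A * B) by (replace (C ^ 2) with (C * C) by ring; lra).
  destruct (opnorm_bounds A C B HA HB HC2) as (o & Ho & Ho1 & Ho2).
  rewrite Ho. cbn [Rbar_mult Rbar_mult' Rbar_lt].
  set (W := p1 ^ 2 + q1 ^ 2 + p0 ^ 2 + q0 ^ 2).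
  assert (HF : (1 + mx ^ 2 + my ^ 2) / my = W / t).
  { assert (Hn0' : p0 ^ 2 + q0 ^ 2 <> 0) by (change (n0 <> 0); lra).
    assert (Ht0 : t <> 0) by lra.
    unfold mx, my, W, n0, t. unfold t in Ht0. field. split; auto. }
  rewrite HF in Hps1, Hps2.
  set (F := W / t) in *.
  assert (HFt : F * t = W) by (unfold F; field; lra).
  set (D := A * B - C * C) in *.
  assert (Hii : (A + B) * ff0 - D * W = (A * p1 + C * p0) ^ 2 + (C * p1 + B * p0) ^ 2 + (A * q1 + C * q0) ^ 2 + (C * q1 + B * q0) ^ 2)
    by (rewrite Hfe; unfold D, W; ring).
  assert (Hii' : D * W <= (A + B) * ff0).
  { pose proof (pow2_ge_0 (A * p1 + C * p0)). pose proof (pow2_ge_0 (C * p1 + B * p0)).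
    pose proof (pow2_ge_0 (A * q1 + C * q0)). pose proof (pow2_ge_0 (C * q1 + B * q0)). lra. }
  pose proof (quad_ineq A B C p1 p0 q1 q0 HA HB HDpos) as Hq. cbv zeta in Hq. fold t in Hq.
  assert (Hg' : (B * p1 ^ 2 - 2 * C * p1 * p0 + A * p0 ^ 2) + (B * q1 ^ 2 - 2 * C * q1 * q0 + A * q0 ^ 2) = (A + B) * W - ff0)
    by (rewrite Hfe; unfold W; ring).
  assert (Hf' : (A * p1 ^ 2 + 2 * C * p1 * p0 + B * p0 ^ 2) + (A * q1 ^ 2 + 2 * C * q1 * q0 + B * q0 ^ 2) = ff0)
    by (rewrite Hfe; ring).
  rewrite Hg', Hf' in Hq.
  assert (Hff0 : 0 <= ff0) by (unfold ff0, ff; apply ssum_nonneg; intros; pose proof (pow2_ge_0 (php v alpha x E u (S i)));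
    pose proof (pow2_ge_0 (phq v alpha x E u (S i))); lra).
  assert (HAB : 0 < A + B) by lra.
  assert (HU : F <= 12 * (eps * (A + B))).
  { assert (E1 : W = D * W * (4 * eps ^ 2)).
    { replace (D * W * (4 * eps ^ 2)) with (W * (D * (4 * eps ^ 2))) by ring. rewrite HD. ring. }
    assert (E2 : D * W * (4 * eps ^ 2) <= (A + B) * ff0 * (4 * eps ^ 2)) by (apply Rmult_le_compat_r; lra).
    assert (E3 : (A + B) * ff0 * (4 * eps ^ 2) = (4 * eps * (A + B)) * (eps * ff0)) by ring.
    assert (E4 : (4 * eps * (A + B)) * (eps * ff0) <= (4 * eps * (A + B)) * (3 * t))
      by (apply Rmult_le_compat_l; [apply Rmult_le_pos; lra | lra]).
    assert (E5 : F * t <= (12 * (eps * (A + B))) * t) by lra.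
    apply Rmult_le_reg_r with t; auto. }
  assert (HL : eps * (A + B) <= 6 * F).
  { assert (E1 : ((A + B) * t) ^ 2 <= 2 * (ff0 * ((A + B) * W))).
    { pose proof (pow2_ge_0 ff0). lra. }
    assert (E2 : (A + B) * ((A + B) * t ^ 2) <= (A + B) * (2 * ff0 * W)).
    { replace ((A + B) * ((A + B) * t ^ 2)) with (((A + B) * t) ^ 2) by ring. lra. }
    apply Rmult_le_reg_l in E2; auto.
    assert (E3 : eps * ((A + B) * t ^ 2) <= eps * (2 * ff0 * W)) by (apply Rmult_le_compat_l; lra).
    assert (E4 : eps * (2 * ff0 * W) = 2 * W * (eps * ff0)) by ring.
    assert (HW : 0 <= W) by (unfold W; pose proof (pow2_ge_0 p1); pose proof (pow2_ge_0 q1); pose proof (pow2_ge_0 p0); pose proof (pow2_ge_0 q0); lra).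
    assert (E5 : 2 * W * (eps * ff0) <= 2 * W * (3 * t)) by (apply Rmult_le_compat_l; lra).
    assert (E6 : (eps * (A + B) * t) * t <= (6 * F * t) * t) by (replace (6 * F * t) with (6 * (F * t)) by ring; rewrite HFt; lra).
    apply Rmult_le_reg_r with t; auto. apply Rmult_le_reg_r with t; auto. }
  assert (HF0 : 0 < F) by (unfold F; apply Rdiv_lt_0_compat; [|lra];
      unfold W; pose proof (pow2_ge_0 p1); pose proof (pow2_ge_0 q1); change (0 < n0) in Hn0; unfold n0 in Hn0; lra).
  assert (Heo : 0 < eps * o) by (apply Rmult_lt_0_compat; lra).
  assert (Heo2 : eps * o <= eps * (A + B)) by (apply Rmult_le_compat_l; lra).
  assert (Heo3 : eps * ((A + B) / 2) <= eps * o) by (apply Rmult_le_compat_l; lra).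
  split; lra.
Qed.
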